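(* Let $t$ be a positive integer. Let $\overline{\mathcal{G}}_t$ be the set of nonempty overpartitions whose largest and smallest parts differ by at most $t$, and whose largest part is not overlined whenever this difference is exactly $t$. Let $\overline{\mathcal{P}}_t$ be the set of nonempty overpartitions all of whose parts are at most $t$ and in which no part equal to $t$ is overlined. Define $\phi$ on $\overline{\mathcal{G}}_t$ as follows: for $\pi=(\pi_1,\dots,\pi_\ell)\in\overline{\mathcal{G}}_t$ (parts weakly decreasing), let $s=\lfloor \pi_\ell/t\rfloor$, and let $k$ be the positive integer with $\pi_k\ge (s+1)t>\pi_{k+1}$ if such an integer exists, and $k=0$ otherwise. Set \[ \phi(\pi)=(\underbrace{t,\dots,t}_{s(\ell-k)+(s+1)k},\ \pi_{k+1}-st,\dots,\pi_\ell-st,\ \pi_1-(s+1)t,\dots,\pi_k-(s+1)t), \] where the parts equal to $t$ listed first are not overlined, each part $\pi_i-st$ or $\pi_i-(s+1)t$ is overlined exactly when $\pi_i$ is overlined, and afterwards all parts equal to $0$ are deleted. Then $\phi(\pi)\in\overline{\mathcal{P}}_t$ for every $\pi\in\overline{\mathcal{G}}_t$, and $|\phi(\pi)|=|\pi|$.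
   Context: An overpartition is a partition (weakly decreasing sequence of positive integers) in which the first occurrence of each distinct part size may be overlined; an overlined part $\overline{a}$ has size $a$ for all comparisons and arithmetic. $|\lambda|$ denotes the sum of the parts of $\lambda$. $\lfloor x\rfloor$ is the largest integer not exceeding $x$. *)

(* Defs.v *)
From mathcomp Require Import all_boot.
Set Implicit Arguments. Unset Strict Implicit. Unset Printing Implicit Defensive.

(* An overpartition is encoded as a list of parts (size, overlined?), listed
   in weakly decreasing order of size. *)
Definition opart := (nat * bool)%type.
Definition overpartition := seq opart.

(* Well-formedness: weakly decreasing sizes, positive parts, and an overlined
   part must be the first occurrence of its size. *)
Definition is_overpartition (l : overpartition) : bool :=
  sorted geq (map fst l) &&
  all (fun p : opart => 0 < p.1) l &&
  [forall i : 'I_(size l),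
     (nth (0, false) l i).2 ==>
     [forall j : 'I_(size l), (j < i) ==> ((nth (0, false) l j).1 != (nth (0, false) l i).1)]].

Definition op_weight (l : overpartition) : nat := sumn (map fst l).

Definition largest (l : overpartition) : nat := (head (0, false) l).1.
Definition smallest (l : overpartition) : nat := (last (0, false) l).1.

Definition in_Gbar (t : nat) (l : overpartition) : bool :=
  is_overpartition l && (l != [::]) &&
  (largest l - smallest l <= t) &&
  ((largest l - smallest l == t) ==> ~~ (head (0, false) l).2).

Definition in_Pbar (t : nat) (l : overpartition) : bool :=
  is_overpartition l && (l != [::]) &&
  all (fun p : opart => p.1 <= t) l &&
  all (fun p : opart => (p.1 == t) ==> ~~ p.2) l.

Definition phi_s (t : nat) (l : overpartition) : nat := smallest l %/ t.

(* k = the index with pi_k >= (s+1)t > pi_{k+1} (0 if none); since the parts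
   are weakly decreasing, this is the number of parts >= (s+1)t. *)
Definition phi_k (t : nat) (l : overpartition) : nat :=
  count (fun p : opart => (phi_s t l).+1 * t <= p.1) l.

Definition phi (t : nat) (l : overpartition) : overpartition :=
  let s := phi_s t l in
  let k := phi_k t l in
  let ell := size l in
  [seq p <- nseq (s * (ell - k) + s.+1 * k) (t, false)
            ++ [seq (p.1 - s * t, p.2) | p <- drop k l]
            ++ [seq (p.1 - s.+1 * t, p.2) | p <- take k l]
     | p.1 != 0].

(* Main.v *)
Require Import Defs.
From mathcomp Require Import all_boot.
From mathcomp Require Import zify.

Definition Rov (x y : opart) : bool := y.2 ==> (x.1 != y.1).
Definition Qr (x y : opart) : bool := (y.1 <= x.1) && Rov x y.

Lemma ovlE (l : overpartition) :
  [forall i : 'I_(size l),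
     (nth (0, false) l i).2 ==>
     [forall j : 'I_(size l), (j < i) ==> ((nth (0, false) l j).1 != (nth (0, false) l i).1)]]
  = pairwise Rov l.
Proof.
apply/idP/(pairwiseP (0,false)).
- move/forallP => H j i hj hi ji; rewrite /Rov; apply/implyP => ov.
  move: (H (Ordinal hi)) => /implyP /(_ ov) /forallP /(_ (Ordinal hj)) /implyP.
  by apply.
- move=> H; apply/forallP => i; apply/implyP => ov; apply/forallP => j;
  apply/implyP => ji.
  have := H j i (ltn_ord j) (ltn_ord i) ji.
  by rewrite /Rov ov.
Qed.

Lemma take_drop_count (T : eqType) (r : rel T) (P : pred T) (l : seq T) :
  pairwise r l -> (forall x y, r x y -> P y -> P x) ->
  all P (take (count P l) l) && all (predC P) (drop (count P l) l).
Proof.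
move=> + H; elim: l => [|x l IH] //=.
move=> /andP [hx hl].
case Px: (P x) => /=.
  by rewrite /= Px /=; apply: IH.
have allC : all (predC P) l.
  apply/allP => y yin; apply/negP => Py.
  by have := H x y (allP hx y yin) Py; rewrite Px.
have c0 : count P l = 0.
  by move: allC; rewrite all_predC has_count -eqn0Ngt => /eqP.
by rewrite c0 /= Px allC.
Qed.

Lemma sum_shift (c : nat) (q : seq opart) :
  all (fun p : opart => c <= p.1) q ->
  sumn (map fst (map (fun p : opart => (p.1 - c, p.2)) q)) + c * size q = sumn (map fst q).
Proof.
elim: q => [|x q IH] /=; first by rewrite muln0.
move=> /andP [hx hq]; have := IH hq; rewrite mulnS; lia.
Qed.

Lemma sum_filter0 (w : seq opart) :
  sumn (map fst [seq p <- w | p.1 != 0]) = sumn (map fst w).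
Proof.
elim: w => [|x w IH] //=; case: eqP => [->|_] /=; by rewrite IH.
Qed.

Lemma all_filter' (T : eqType) (a b : pred T) (s : seq T) :
  all a s -> all a (filter b s).
Proof. by move=> H; apply/allP => x; rewrite mem_filter => /andP [_ /(allP H)]. Qed.

Lemma A2 (y M m a t : nat) : 0 < t -> y <= M -> M - m <= t -> m < t + a -> y - (t + a) < t.
Proof. lia. Qed.
Lemma A3 (x y m M a t : nat) : m <= x -> y <= M -> M - m <= t -> a <= x ->
  y - (t + a) <= x - a.
Proof. lia. Qed.
Lemma A4 (x y m M a t : nat) : m <= x -> y <= M -> M - m <= t -> a <= x -> t + a <= y ->
  x - a = y - (t + a) -> y = M /\ M - m = t.
Proof. lia. Qed.
Lemma A5 (x y c : nat) : c <= x -> c <= y -> x - c = y - c -> x = y.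
Proof. lia. Qed.
Lemma A6 (t s a k X Y : nat) :
  t * (s * a + s.+1 * k) + (X + Y) = X + s * t * a + (Y + s.+1 * t * k).
Proof. rewrite mulnDr !mulnA [t * s]mulnC [t * s.+1]mulnC. lia. Qed.
Lemma A7 (a b : nat) : 0 < a -> 0 = a + b -> False.
Proof. lia. Qed.

Theorem mainTheorem2 (t : nat) (ht : 0 < t) (pi : overpartition) :
  in_Gbar t pi -> in_Pbar t (phi t pi) /\ op_weight (phi t pi) = op_weight pi.
Proof.
rewrite /in_Gbar /is_overpartition ovlE.
move=> /andP [/andP [/andP [/andP [/andP [Hsort Hpos] Hov] Hne] HMm] Hhd].
case: pi Hsort Hpos Hov Hne HMm Hhd => [|x0 l'] // Hsort Hpos Hov _ HMm Hhd.
set l := x0 :: l' in Hsort Hpos Hov *.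
have Hs : pairwise (fun x y : opart => y.1 <= x.1) l.
  move: Hsort; rewrite sorted_pairwise; last by move=> a b c /= h1 h2; exact: leq_trans h2 h1.
  by rewrite pairwise_map.
have HQ : pairwise Qr l by rewrite /Qr pairwise_relI Hs Hov.
rewrite /largest /smallest /= in HMm Hhd.
set M := x0.1 in HMm Hhd.
set m := (last x0 l').1 in HMm Hhd.
have HM : all (fun p : opart => p.1 <= M) l.
  rewrite /= leqnn /=; move: Hs; rewrite /l pairwise_cons => /andP [h _]; exact: h.
have Hm : all (fun p : opart => m <= p.1) l.
  move: Hs; rewrite /l lastI pairwise_rcons => /andP [h _].
  rewrite all_rcons leqnn /=; exact: h.
rewrite /phi /phi_k /phi_s /smallest /=.
rewrite -/l -/m.
set s := m %/ t.
set P := (fun p : opart => s.+1 * t <= p.1).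
set k := count P l.
have Htd : all P (take k l) && all (predC P) (drop k l).
  apply: (@take_drop_count _ (fun x y : opart => y.1 <= x.1)) => //.
  by move=> x y /= hxy hy; rewrite /P; apply: leq_trans hy hxy.
case/andP: Htd => HT HD.
have st_m : s * t <= m by apply: leq_divM.
have m_st : m < s.+1 * t by apply: ltn_ceil.
have HD' : all (fun p : opart => (s * t <= p.1) && (p.1 < s.+1 * t)) (drop k l).
  apply/allP => p pin; have := allP HD p pin; rewrite /= /P -ltnNge => ->.
  rewrite andbT; apply: leq_trans st_m _; apply: (allP Hm); exact: mem_drop pin.
have HT' : all (fun p : opart => (s.+1 * t <= p.1) && (p.1 <= M)) (take k l).
  apply/allP => p pin; have := allP HT p pin; rewrite /P /= => ->; apply: (allP HM); exact: mem_take pin.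
set N := s * (size l - k) + s.+1 * k.
set D := [seq (p.1 - s * t, p.2) | p <- drop k l].
set T := [seq (p.1 - s.+1 * t, p.2) | p <- take k l].
set w := nseq N (t, false) ++ D ++ T.
have HDlt : all (fun p : opart => p.1 < t) D.
  apply/allP => p; rewrite /D => /mapP [q qin ->] /=.
  move: (allP HD' q qin) => /andP [h1 h2]; move: h2; rewrite mulSn => h2; move: (s * t) h1 h2 => a h1 h2; clear -h1 h2; lia.
have HTlt : all (fun p : opart => p.1 < t) T.
  apply/allP => p; rewrite /T => /mapP [q qin ->] /=.
  move: (allP HT' q qin) => /andP [h1 h2]; rewrite mulSn in m_st *; exact: (@A2 _ _ _ _ _) ht h2 HMm m_st.
have HDTlt : all (fun p : opart => p.1 < t) (D ++ T) by rewrite all_cat HDlt HTlt.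
have Hwle : all (fun p : opart => p.1 <= t) w.
  rewrite /w all_cat all_nseq leqnn orbT /=.
  apply/allP => p /(allP HDTlt); exact: ltnW.
have Hwov : all (fun p : opart => (p.1 == t) ==> ~~ p.2) w.
  rewrite /w all_cat all_nseq /= eqxx /= orbT /=.
  apply/allP => p /(allP HDTlt) /= h; by rewrite ltn_eqF.
have HwQ : pairwise Qr w.
  rewrite /w pairwise_cat; apply/and3P; split.
  - apply/allrelP => x y; rewrite mem_nseq => /andP [_ /eqP ->] /(allP HDTlt) h.
    by rewrite /Qr /Rov /= (ltnW h) (gtn_eqF h) implybT.
  - clear; elim: N => [|n IH] //=; rewrite IH andbT all_nseq /Qr /Rov /= leqnn orbT //.
  rewrite pairwise_cat; apply/and3P; split.
  - rewrite allrel_mapl allrel_mapr; apply/allrelP => x y xin yin.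
    move: (allP HD' x xin) (allP HT' y yin) => /andP [hx1 hx2] /andP [hy1 hy2].
    have hxm : m <= x.1 by apply: (allP Hm); exact: mem_drop xin.
    rewrite /Qr /Rov /=; apply/andP; split.
      exact: (@A3 _ _ _ _ _ _) hxm hy2 HMm hx1.
    apply/implyP => yov; apply/negP => /eqP heq.
    rewrite mulSn in hy1 heq.
    have [hyM /eqP hMm] := (@A4 _ _ _ _ _ _) hxm hy2 HMm hx1 hy1 heq.
    move: Hhd; rewrite hMm /= => hx0.
    have : y \in l by exact: mem_take yin.
    rewrite inE => /orP [/eqP yx0 | yl'].
      by move: yov hx0; rewrite yx0 => ->.
    move: HQ; rewrite /l pairwise_cons => /andP [/allP /(_ y yl') + _].
    by rewrite /Qr /Rov yov hyM eqxx andbF.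
  - rewrite pairwise_map.
    apply: (@sub_in_pairwise _ (fun p : opart => s * t <= p.1) Qr).
    + move=> x y hx hy; rewrite /Qr /Rov /= => /andP [h1 h2]; rewrite leq_sub2r //=.
      apply/implyP => yov; move: h2; rewrite yov /= => /eqP hne; apply/eqP.
      move=> e; apply: hne; exact: (@A5 _ _ _) hx hy e.
    + apply/allP => p /(allP HD') /andP [] //.
    + have HQ2 := HQ; rewrite -(cat_take_drop k l) pairwise_cat in HQ2.
      by case/and3P: HQ2.
  - rewrite /T pairwise_map.
    apply: (@sub_in_pairwise _ (fun p : opart => s.+1 * t <= p.1) Qr).
    + move=> x y hx hy; rewrite /Qr /Rov /= => /andP [h1 h2]; rewrite leq_sub2r //=.
      apply/implyP => yov; move: h2; rewrite yov /= => /eqP hne; apply/eqP.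
      move=> e; apply: hne; exact: (@A5 _ _ _) hx hy e.
    + exact: HT.
    + have HQ2 := HQ; rewrite -(cat_take_drop k l) pairwise_cat in HQ2.
      by case/and3P: HQ2.
have Hweight : op_weight [seq p <- w | p.1 != 0] = op_weight l.
  rewrite /op_weight sum_filter0 /w !map_cat !sumn_cat map_nseq sumn_nseq.
  have hD : all (fun p : opart => s * t <= p.1) (drop k l).
    by apply/allP => p /(allP HD') /andP [].
  have E1 := @sum_shift _ _ hD.
  have E2 := @sum_shift _ _ HT.
  have hk : k <= size l by apply: count_size.
  have El : sumn (map fst l) = sumn (map fst (drop k l)) + sumn (map fst (take k l)).
    by rewrite -{1}(cat_take_drop k l) map_cat sumn_cat addnC.
  rewrite El -E1 -E2 size_drop size_takel // /N /D /T.
  exact: A6.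
split; last exact: Hweight.
rewrite /in_Pbar /is_overpartition ovlE.
have HfQ := pairwise_filter (fun p : opart => p.1 != 0) HwQ.
move: HfQ; rewrite /Qr pairwise_relI => /andP [Hf1 Hf2].
rewrite Hf2 andbT.
apply/andP; split; last by apply: all_filter'.
apply/andP; split; last by apply: all_filter'.
apply/andP; split.
  apply/andP; split.
    rewrite sorted_pairwise; last by move=> a b c /= h1 h2; exact: leq_trans h2 h1.
    by rewrite pairwise_map.
  by apply/allP => p; rewrite mem_filter => /andP [h _]; rewrite lt0n.
apply/negP => /eqP h0; move: Hweight; rewrite h0 /op_weight /=.
move: Hpos; rewrite /l /= => /andP [h _]; exact: (@A7 _ _) h.
Qed.
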